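(* Let $\mathcal{H}$ be a hypertree whose basic sets are $B_1,\dots,B_m$, and let $T$ be a tree with vertex set $V(\mathcal{H})$. Then $T$ is a host tree of $\mathcal{H}$ if and only if $E(T)=\bigcup_{i=1}^m E_i$, where $E_i$ is $B_i$-admissible for each $1\le i\le m$.
   Context: A hypergraph $\mathcal{H}$ has a finite vertex set $V(\mathcal{H})$ and a finite family of nonempty subsets (edges). A host tree is a tree on $V(\mathcal{H})$ in which every edge induces a connected subgraph; a hypertree is a hypergraph with a host tree. For $V'\subseteq V(\mathcal{H})$, $I_\mathcal{H}(V')$ is the intersection of all edges containing $V'$, or $V(\mathcal{H})$ if none does. For $A\subseteq V(\mathcal{H})$, $\overline{\mathcal{H}_A}$ is the hypergraph on $V(\mathcal{H})$ whose edges are the edges of $\mathcal{H}$ not containing $A$. The 2-section of a hypergraph is the graph on its vertices where two distinct vertices are adjacent iff some edge contains both. A union of sets is connected if the intersection graph of the sets is connected. $Comp(\mathcal{H})$ is the hypergraph without repeated edges on $V(\mathcal{H})$ whose edges are $V(\mathcal{H})$, all singletons, and all proper subsets obtainable from edges of $\mathcal{H}$ by repeated nonempty intersections and connected unions; a basic set is an edge of $Comp(\mathcal{H})$ with more than one vertex that is not a connected union of strictly smaller edges of $Comp(\mathcal{H})$. For a basic set $B$: $A(B)$ is the set of connected components of the 2-section of $\overline{\mathcal{H}_B}$ that contain at least one vertex of $B$; $\Delta(B)$ is the set of pairs $uv$ with $u,v\in B$ lying in different connected components of the 2-section of $\overline{\mathcal{H}_B}$. A collection $E\subseteq\Delta(B)$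 is $B$-admissible if the graph $\Gamma_{B,E}$ with vertex set $A(B)$, having for each $e\in E$ an edge between the components of $A(B)$ containing the two endpoints of $e$, is a tree. *)

(* Defs.v *)
(* Hypergraphs on a finite vertex type V (V(H) = all of V). *)
From mathcomp Require Import all_boot.
Set Implicit Arguments.
Unset Strict Implicit.
Unset Printing Implicit Defensive.

(* A hypergraph on V: a family of nonempty subsets of V (repetitions of edges
   are irrelevant for every notion below, so a set of sets is used). *)
Definition hypergraph (V : finType) (H : {set {set V}}) : Prop := set0 \notin H.

(* Multigraph whose edges are the 2-sets e in E, the edge e = {u,v} joining
   f u and f v (f maps underlying points to vertices). *)
Definition medge (V W : finType) (f : V -> W) (E : {set {set V}}) : rel W :=
  fun x y => [exists e in E, [exists u in e, [exists v in e,
               (u != v) && (f u == x) && (f v == y)]]].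

(* Tree on vertex set X: connected, and every edge is a bridge
   (i.e. minimally connected; parallel edges are therefore excluded). *)
Definition is_mtree (V W : finType) (f : V -> W) (X : {set W})
    (E : {set {set V}}) : Prop :=
  (forall x y, x \in X -> y \in X -> connect (medge f E) x y) /\
  (forall e u v, e \in E -> u \in e -> v \in e -> u != v ->
     ~~ connect (medge f (E :\ e)) (f u) (f v)).

Definition is_tree (V : finType) (T : {set {set V}}) : Prop :=
  (forall e, e \in T -> #|e| = 2) /\ is_mtree id [set: V] T.

Definition host_tree (V : finType) (H T : {set {set V}}) : Prop :=
  is_tree T /\
  forall F, F \in H -> forall x y, x \in F -> y \in F ->
    connect (medge id [set e in T | e \subset F]) x y.

Definition hypertree (V : finType) (H : {set {set V}}) : Prop :=
  hypergraph H /\ exists T, host_tree H T.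

Definition inter_rel (V : finType) (S : {set {set V}}) : rel {set V} :=
  fun X Y => [&& X \in S, Y \in S & X :&: Y != set0].

Definition conn_family (V : finType) (S : {set {set V}}) : Prop :=
  S != set0 /\ forall X Y, X \in S -> Y \in S -> connect (inter_rel S) X Y.

Inductive obtainable (V : finType) (H : {set {set V}}) : {set V} -> Prop :=
| obt_edge F : F \in H -> obtainable H F
| obt_cap A B : obtainable H A -> obtainable H B -> A :&: B != set0 ->
    obtainable H (A :&: B)
| obt_cup (S : {set {set V}}) : (forall X, X \in S -> obtainable H X) ->
    conn_family S -> obtainable H (\bigcup_(X in S) X).

Definition comp_edge (V : finType) (H : {set {set V}}) (A : {set V}) : Prop :=
  A = [set: V] \/ #|A| = 1 \/ (obtainable H A /\ A \proper [set: V]).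

Definition basic (V : finType) (H : {set {set V}}) (B : {set V}) : Prop :=
  comp_edge H B /\ 1 < #|B| /\
  ~ (exists S : {set {set V}},
       (forall X, X \in S -> comp_edge H X /\ X \proper B) /\
       conn_family S /\ \bigcup_(X in S) X = B).

(* 2-section of the hypergraph \overline{H_B} (edges of H not containing B). *)
Definition adjB (V : finType) (H : {set {set V}}) (B : {set V}) : rel V :=
  fun u v => (u != v) &&
    [exists F in H, [&& ~~ (B \subset F), u \in F & v \in F]].

Definition compB (V : finType) (H : {set {set V}}) (B : {set V}) (x : V)
  : {set V} := [set y | connect (adjB H B) x y].

Definition AB (V : finType) (H : {set {set V}}) (B : {set V}) : {set {set V}} :=
  [set compB H B x | x in B].

Definition DeltaB (V : finType) (H : {set {set V}}) (B : {set V})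
  : {set {set V}} :=
  [set [set u; v] | u in B, v in B & ~~ connect (adjB H B) u v].

Definition admissible (V : finType) (H : {set {set V}}) (B : {set V})
    (E : {set {set V}}) : Prop :=
  E \subset DeltaB H B /\ is_mtree (compB H B) (AB H B) E.

(* Main.v *)
Require Import Defs.
From mathcomp Require Import all_boot.
From Stdlib Require Import Classical.
Set Implicit Arguments.
Unset Strict Implicit.
Unset Printing Implicit Defensive.

Section Gen.
Variable V : finType.
Implicit Types (E T : {set {set V}}) (X Y B F : {set V}).

Lemma medge_sym (W : finType) (f : V -> W) E : symmetric (medge f E).
Proof.
move=> x y; apply/idP/idP => /existsP [e /andP [He /existsP [u /andP [Hu /existsP [v /andP [Hv /andP [/andP [uv fu] fv]]]]]]];
  apply/existsP; exists e; rewrite He /=; apply/existsP; exists v; rewrite Hv /=;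
  apply/existsP; exists u; by rewrite Hu /= (eq_sym v u) uv fu fv.
Qed.

Lemma medge_step (W : finType) (f : V -> W) E e u v :
  e \in E -> u \in e -> v \in e -> u != v -> medge f E (f u) (f v).
Proof.
move=> He Hu Hv uv; apply/existsP; exists e; rewrite He /=; apply/existsP; exists u.
rewrite Hu /=; apply/existsP; exists v; by rewrite Hv uv !eqxx.
Qed.

Lemma medgeP (W : finType) (f : V -> W) E x y :
  medge f E x y -> exists e u v, [/\ e \in E, u \in e, v \in e, u != v & f u = x /\ f v = y].
Proof.
move=> /existsP [e /andP [He /existsP [u /andP [Hu /existsP [v /andP [Hv /andP [/andP [uv /eqP fu] /eqP fv]]]]]]].
by exists e, u, v.
Qed.

Lemma medge_sub (W : finType) (f : V -> W) E E' :
  E \subset E' -> subrel (medge f E) (medge f E').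
Proof.
move=> sEE' x y /medgeP [e [u [v [He Hu Hv uv [<- <-]]]]].
by apply: medge_step (subsetP sEE' _ He) Hu Hv uv.
Qed.

Lemma connect_mono (W : finType) (e e' : rel W) x y :
  subrel e e' -> connect e x y -> connect e' x y.
Proof.
move=> sub; apply: connect_sub => a b /sub H; exact: connect1.
Qed.

Lemma conn_ind (W : finType) (e : rel W) (P : W -> Prop) x y :
  P x -> (forall a b, P a -> e a b -> P b) -> connect e x y -> P y.
Proof.
move=> Px step /connectP [p pth ->]; elim: p x Px pth => [|z p IH] x Px //= /andP [exz pth].
apply: IH pth; exact: step exz.
Qed.

Lemma pair_eq (e : {set V}) a b : #|e| = 2 -> a \in e -> b \in e -> a != b -> e = [set a; b].
Proof.
move=> ce ha hb ab; apply/eqP; rewrite eq_sym eqEcard cards2 ab ce leqnn andbT.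
by apply/subsetP => z; rewrite !inE => /orP [] /eqP ->.
Qed.

Lemma pair_mem (e : {set V}) a b c : #|e| = 2 -> a \in e -> b \in e -> a != b -> c \in e -> c = a \/ c = b.
Proof.
move=> ce ha hb ab; rewrite (pair_eq ce ha hb ab) !inE => /orP [] /eqP; by [left|right].
Qed.

Lemma card_ge2 X a b : a \in X -> b \in X -> a != b -> 1 < #|X|.
Proof.
move=> ha hb ab; have : #|[set a; b]| <= #|X|.
  by apply: subset_leq_card; apply/subsetP => z; rewrite !inE => /orP [] /eqP ->.
by rewrite cards2 ab.
Qed.

End Gen.

Notation Tin T X := [set e in T | e \subset X].

Definition conv (V : finType) (T : {set {set V}}) (X : {set V}) :=
  forall x y e, x \in X -> y \in X -> e \in T ->
    ~~ connect (medge id (T :\ e)) x y -> e \subset X.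

Definition conT (V : finType) (T : {set {set V}}) (X : {set V}) :=
  forall x y, x \in X -> y \in X -> connect (medge id (Tin T X)) x y.

Definition Rsep (V : finType) (T : {set {set V}}) (x0 y0 : V) : rel V :=
  fun a b => (a != b) ==> [forall e in T, (a \in e) && (b \in e) ==>
                            ~~ connect (medge id (T :\ e)) x0 y0].

Section Tree.
Variable V : finType.
Implicit Types (E T : {set {set V}}) (X Y B F : {set V}).

Lemma SEP T : is_tree T -> forall p x, uniq (x :: p) -> path (medge id T) x p ->
  path (Rsep T x (last x p)) x p.
Proof.
move=> [TE [Tconn Tbr]]; elim=> [|z p IH] x //=.
rewrite inE negb_or => /andP [/andP [xz xp] uzp] /andP [mxz pth].
have xnz : x \notin z :: p by rewrite inE negb_or xz xp.
have symT : forall E, connect_sym (medge (@id V) E) by move=> E; apply: sym_connect_sym; apply: medge_sym.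
apply/andP; split.
  apply/implyP => _; apply/forall_inP => e He; apply/implyP => /andP [xe ze].
  apply/negP => cxy.
  have czy : connect (medge id (T :\ e)) z (last z p).
    apply/connectP; exists p => //.
    apply: (sub_in_path (P := fun w => w \in z :: p) _ (allss (z :: p)) pth).
    move=> c d cin din /medgeP [e' [u [v [He' Hu Hv uv [cu dv]]]]].
    rewrite /= in cu dv; subst u v.
    have e'ne : e' != e.
      apply/eqP => ee; subst e'.
      have ce := pair_mem (TE _ He) xe ze xz Hu.
      have de := pair_mem (TE _ He) xe ze xz Hv.
      have cnx : c != x by apply: contraNneq xnz => <-.
      have dnx : d != x by apply: contraNneq xnz => <-.
      case: ce => ce; first by rewrite ce eqxx in cnx.
      case: de => de; first by rewrite de eqxx in dnx.
      by rewrite ce de eqxx in uv.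
    by apply: (@medge_step V V id _ e') => //; rewrite in_setD1 e'ne He'.
  move: (Tbr e x z He xe ze xz); apply/negP.
  apply/negPn; apply: (connect_trans cxy); rewrite symT; exact: czy.
have IH' := IH z uzp pth.
apply: (sub_in_path (P := fun w => w \in z :: p) _ (allss (z :: p)) IH').
move=> c d cin din /implyP R; apply/implyP => cd; apply/forall_inP => e He.
apply/implyP => /andP [ce de].
have := R cd; move/forall_inP/(_ e He)/implyP; rewrite ce de => /(_ isT) nczy.
apply/negP => cxy; move/negP: nczy; apply.
case/medgeP: mxz => e' [u [v [He' Hu Hv uv [xu zv]]]]; rewrite /= in xu zv; subst u v.
have e'ne : e' != e.
  apply/eqP => ee; subst e'.
  have cnx : c != x by apply: contraNneq xnz => <-.
  have dnx : d != x by apply: contraNneq xnz => <-.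
  case: (pair_mem (TE _ He) Hu Hv uv ce) => ce'; first by rewrite ce' eqxx in cnx.
  case: (pair_mem (TE _ He) Hu Hv uv de) => de'; first by rewrite de' eqxx in dnx.
  by rewrite ce' de' eqxx in cd.
have sxz : medge id (T :\ e) x z by apply: (@medge_step V V id _ e') => //; rewrite in_setD1 e'ne He'.
by apply: (connect_trans _ cxy); rewrite symT; apply: connect1.
Qed.


Lemma symE E : connect_sym (medge (@id V) E).
Proof. by apply: sym_connect_sym; apply: medge_sym. Qed.

Lemma Tin_mono T X Y : X \subset Y -> subrel (medge id (Tin T X)) (medge id (Tin T Y)).
Proof.
move=> sXY; apply: medge_sub; apply/subsetP => e; rewrite !inE => /andP [-> /subset_trans]; exact.
Qed.

Lemma L1 T X : conT T X -> conv T X.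
Proof.
move=> cX x y e xX yX eT nc; case: (boolP (e \subset X)) => // nsub.
move/negP: nc; case; apply: connect_mono (cX x y xX yX).
apply: medge_sub; apply/subsetP => e'; rewrite !inE => /andP [e'T e'X]; rewrite e'T andbT.
by apply: contraNneq nsub => <-.
Qed.

Lemma L2 T X : is_tree T -> conv T X -> conT T X.
Proof.
move=> Ttr cX x y xX yX; have [TE [Tconn Tbr]] := Ttr.
case/connectP: (Tconn x y (in_setT _) (in_setT _)) => p pth yE; subst y.
move: yX; case: (shortenP pth) => q pthq uq _ yX.
have R := SEP Ttr uq pthq.
apply/connectP; exists q => //.
have : path [rel a b | medge id T a b && Rsep T x (last x q) a b] x q by rewrite path_relI pthq R.
apply: sub_path => a b /= /andP [/medgeP [e [u [v [eT ue ve uv [au bv]]]]] /implyP Rab].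
rewrite /= in au bv; subst u v.
move: (Rab uv) => /forall_inP /(_ e eT) /implyP; rewrite ue ve => /(_ isT) nc.
have eX := cX _ _ _ xX yX eT nc.
by apply: (@medge_step V V id _ e) => //; rewrite inE eT eX.
Qed.


Lemma UnionConn T (S : {set {set V}}) :
  (forall Y, Y \in S -> conT T Y) -> conn_family S -> conT T (\bigcup_(Y in S) Y).
Proof.
move=> cS [_ cF] x y /bigcupP [Y1 Y1S xY1] /bigcupP [Y2 Y2S yY2].
pose P (Z : {set V}) := Z \in S /\ forall z, z \in Z -> connect (medge id (Tin T (\bigcup_(Y in S) Y))) x z.
have : P Y2.
  apply: (conn_ind (e := inter_rel S) (P := P) (x := Y1)); last exact: cF.
    split => // z zY1; apply: connect_mono (cS _ Y1S x z xY1 zY1).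
    by apply: Tin_mono; apply: bigcup_sup.
  move=> Z Z' [ZS cZ] /and3P [_ Z'S /set0Pn [w]]; rewrite inE => /andP [wZ wZ'].
  split => // z' z'Z'; apply: connect_trans (cZ w wZ) _.
  apply: connect_mono (cS _ Z'S w z' wZ' z'Z').
  by apply: Tin_mono; apply: bigcup_sup.
by case=> _; apply.
Qed.

Lemma conv_cap T A B : conv T A -> conv T B -> conv T (A :&: B).
Proof.
move=> cA cB x y e; rewrite !inE => /andP [xA xB] /andP [yA yB] eT nc.
by rewrite subsetI (cA x y e) // (cB x y e).
Qed.

Lemma obt_conv H T X : is_tree T -> host_tree H T -> obtainable H X -> conv T X.
Proof.
move=> Ttr [_ hT]; elim=> {X} [F FH|A B _ cA _ cB _|S _ IH cS].
- by apply: L1 => x y; apply: hT.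
- exact: conv_cap.
- apply: L1; apply: UnionConn => // Y YS; apply: L2 => //; exact: IH.
Qed.

Lemma comp_conv H T X : is_tree T -> host_tree H T -> comp_edge H X -> conv T X.
Proof.
move=> Ttr hT [eX|[c1|[oX _]]].
- by rewrite eX => x y e _ _ _ _; apply: subsetT.
- move=> x y e xX yX _; move: (eq_leq c1) => /card_le1P /(_ x xX) /(_ y).
  rewrite yX inE => /esym /eqP ->; by rewrite connect0.
- exact: obt_conv oX.
Qed.

Lemma AvoidE H T B (t : {set V}) : host_tree H T ->
  [forall F in H, ~~ (B \subset F) ==> ~~ (t \subset F)] ->
  forall a b, connect (adjB H B) a b -> connect (medge id (T :\ t)) a b.
Proof.
move=> [_ hT] /forall_inP hF; apply: connect_sub => a b /andP [ab /existsP [F /and4P [FH nBF aF bF]]].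
apply: connect_mono (hT F FH a b aF bF); apply: medge_sub.
apply/subsetP => e; rewrite !inE => /andP [eT eF]; rewrite eT andbT.
apply: contraTneq eF => ->; move/implyP: (hF F FH); apply.
exact: nBF.
Qed.

Definition adjIn H X : rel V := fun c d => [&& adjB H X c d, c \in X & d \in X].

Lemma HELLY H T X : is_tree T -> host_tree H T -> conv T X ->
  forall a b, a \in X -> b \in X -> connect (adjB H X) a b -> connect (adjIn H X) a b.
Proof.
move=> Ttr hT cX a b aX bX cab.
case/connectP: (L2 Ttr cX aX bX) => p pth bE; subst b.
move: bX cab; case: (shortenP pth) => q pthq uq _ bX cab.
have pthT : path (medge id T) a q.
  by apply: sub_path pthq; apply: medge_sub; apply/subsetP => e; rewrite inE => /andP [].
have R := SEP Ttr uq pthT.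
apply/connectP; exists q => //.
have : path [rel c d | medge id (Tin T X) c d && Rsep T a (last a q) c d] a q by rewrite path_relI pthq R.
apply: sub_path => c d /= /andP [/medgeP [t [u [v [tT ut vt uv [cu dv]]]]] /implyP Rcd].
rewrite /= in cu dv; subst u v; move: tT; rewrite inE => /andP [tT tX].
move: (Rcd uv) => /forall_inP /(_ t tT) /implyP; rewrite ut vt => /(_ isT) nc.
case: (boolP [forall F in H, ~~ (X \subset F) ==> ~~ (t \subset F)]) => hF.
  by move/negP: nc; case; apply: AvoidE hF _ _ cab.
move: hF; rewrite negb_forall_in => /exists_inP [F FH].
rewrite negb_imply negbK => /andP [nXF tF].
rewrite /adjIn (subsetP tX _ ut) (subsetP tX _ vt) !andbT /adjB uv /=.
by apply/exists_inP; exists F => //; rewrite nXF (subsetP tF _ ut) (subsetP tF _ vt).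
Qed.

End Tree.

Section Facts.
Variable V : finType.
Implicit Types (E T H : {set {set V}}) (X Y B F : {set V}).

Lemma adjB_sym H B : symmetric (adjB H B).
Proof.
move=> x y; rewrite /adjB eq_sym; congr (_ && _); apply/exists_inP/exists_inP => [] [F FH /and3P [a b c]];
  by exists F => //; rewrite a b c.
Qed.

Lemma symB H B : connect_sym (adjB H B).
Proof. by apply: sym_connect_sym; apply: adjB_sym. Qed.

Lemma compB_eq H B a b : connect (adjB H B) a b -> compB H B a = compB H B b.
Proof.
move=> cab; apply/setP => y; rewrite !inE; apply/idP/idP => h.
  by apply: connect_trans h; rewrite symB.
exact: connect_trans cab h.
Qed.

Lemma compB_self H B a : a \in compB H B a.
Proof. by rewrite inE connect0. Qed.

Lemma DeltaP H B e : e \in DeltaB H B ->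
  exists u v, [/\ u \in B, v \in B, ~~ connect (adjB H B) u v & e = [set u; v]].
Proof.
case/imset2P => u v uB; rewrite inE => /andP [vB nc] ->; by exists u, v.
Qed.

Lemma DeltaI H B u v : u \in B -> v \in B -> ~~ connect (adjB H B) u v ->
  [set u; v] \in DeltaB H B.
Proof.
move=> uB vB nc; apply: (imset2_f (fun u v => [set u; v])) => //; by rewrite inE vB nc.
Qed.

Lemma Delta_sub H B e x : e \in DeltaB H B -> x \in e -> x \in B.
Proof.
case/DeltaP => u [v [uB vB _ ->]]; rewrite !inE => /orP [] /eqP -> //.
Qed.

Lemma Delta_nconn H B e x y : e \in DeltaB H B -> x \in e -> y \in e -> x != y ->
  ~~ connect (adjB H B) x y.
Proof.
case/DeltaP => u [v [uB vB nc ->]]; rewrite !inE => /orP [] /eqP -> /orP [] /eqP -> //;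
  by rewrite ?eqxx // symB.
Qed.

Lemma capcomp H X F : comp_edge H X -> F \in H -> ~~ (X \subset F) -> F :&: X != set0 ->
  comp_edge H (F :&: X).
Proof.
move=> [eX|[c1|[oX pX]]] FH nXF ne.
- subst X; rewrite setIT; right; right; split; first exact: obt_edge.
  rewrite properT; apply: contraNneq nXF => ->; exact: subxx.
- right; left; apply/eqP; rewrite eqn_leq -c1 subset_leq_card ?subsetIr //=.
  by rewrite c1 card_gt0.
- right; right; split; first by apply: obt_cap => //; apply: obt_edge.
  by apply: sub_proper_trans pX; apply: subsetIr.
Qed.

Lemma capproper X F : ~~ (X \subset F) -> F :&: X \proper X.
Proof.
move=> nXF; rewrite properE subsetIr /=; apply: contra nXF => sub.
exact: subset_trans sub (subsetIl F X).
Qed.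

Lemma card_le1_eq X x y : #|X| <= 1 -> x \in X -> y \in X -> x = y.
Proof.
move=> /card_le1P /(_ x) h xX yX; move: (h xX y); rewrite yX inE => /esym /eqP ->; done.
Qed.

End Facts.

Section Back.
Variable V : finType.
Implicit Types (E T H : {set {set V}}) (X Y B F : {set V}).

Lemma back H T T0 (Es : {set V} -> {set {set V}}) :
  is_tree T0 -> host_tree H T0 ->
  (forall B, basic H B -> admissible H B (Es B)) ->
  (forall e, e \in T <-> exists B, basic H B /\ e \in Es B) ->
  forall X, comp_edge H X -> conT T X.
Proof.
move=> T0tr hT0 adm Tiff.
suff: forall n X, #|X| < n -> comp_edge H X -> conT T X.
  by move=> h X; apply: (h #|X|.+1).
elim=> [|n IH] X //; rewrite ltnS => Xn cX.
case: (leqP #|X| 1) => c1.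
  by move=> x y xX yX; rewrite (card_le1_eq c1 xX yX) connect0.
case: (classic (exists S : {set {set V}},
       (forall X0, X0 \in S -> comp_edge H X0 /\ X0 \proper X) /\
       conn_family S /\ \bigcup_(X0 in S) X0 = X)) => [[S [hS [cS uS]]]|nd].
  rewrite -uS; apply: UnionConn cS => Y YS; have [cY pY] := hS Y YS.
  apply: IH cY; exact: leq_trans (proper_card pY) Xn.
have basX : basic H X by split.
have [EsD [Gconn _]] := adm X basX.
have K : forall c d, c \in X -> d \in X -> connect (adjB H X) c d ->
    connect (medge id (Tin T X)) c d.
  move=> c d cX' dX cd.
  have := HELLY T0tr hT0 (comp_conv T0tr hT0 cX) cX' dX cd.
  apply: connect_sub => w w' /and3P [/andP [ww' /exists_inP [F FH /and3P [nXF wF w'F]]] wX w'X].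
  have ne : F :&: X != set0 by apply/set0Pn; exists w; rewrite inE wF wX.
  have cY := capcomp cX FH nXF ne.
  have pY := capproper nXF.
  have := IH _ (leq_trans (proper_card pY) Xn) cY w w'.
  rewrite !inE wF wX w'F w'X => /(_ isT isT).
  apply: connect_mono; apply: Tin_mono; exact: subsetIr.
move=> a b aX bX.
pose P (Z : {set V}) := exists w, [/\ w \in X, Z = compB H X w & connect (medge id (Tin T X)) a w].
have : P (compB H X b).
  apply: (conn_ind (e := medge (compB H X) (Es X)) (P := P) (x := compB H X a)); first by exists a; split; rewrite ?connect0.
    move=> Z Z' [w [wX -> caw]] /medgeP [e' [u' [v' [e'E u'e v'e uv [cu cv]]]]].
    have u'X := Delta_sub (subsetP EsD _ e'E) u'e.
    have v'X := Delta_sub (subsetP EsD _ e'E) v'e.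
    exists v'; split => //.
    have wu : connect (adjB H X) w u' by move: (compB_self H X u'); rewrite cu inE.
    apply: connect_trans (connect_trans caw (K _ _ wX u'X wu)) (connect1 _).
    have e'T : e' \in T by apply/Tiff; exists X.
    apply: (@medge_step V V id _ e') => //; rewrite inE e'T /=.
    by apply/subsetP => z ze; apply: Delta_sub (subsetP EsD _ e'E) ze.
  by apply: Gconn; apply: imset_f.
move=> [w [wX eq caw]]; apply: connect_trans caw (K _ _ wX bX _).
by move: (compB_self H X b); rewrite eq inE.
Qed.

End Back.

Section Fwd.
Variable V : finType.
Implicit Types (E T H : {set {set V}}) (X Y B F : {set V}).

Lemma side T (e : {set V}) Y : conT T Y -> ~~ (e \subset Y) ->
  forall a b, a \in Y -> b \in Y -> connect (medge id (T :\ e)) a b.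
Proof.
move=> cY neY a b aY bY; apply: connect_mono (cY a b aY bY); apply: medge_sub.
apply/subsetP => e'; rewrite !inE => /andP [e'T e'Y]; rewrite e'T andbT.
by apply: contraNneq neY => <-.
Qed.

Lemma fwd_adm H T B : is_tree T -> host_tree H T -> basic H B ->
  admissible H B (T :&: DeltaB H B).
Proof.
move=> Ttr hT [cB [B2 _]]; have [TE [Tconn Tbr]] := Ttr.
split; first exact: subsetIr.
split.
  move=> x y /imsetP [b1 b1B ->] /imsetP [b2 b2B ->].
  have cBT := L2 Ttr (comp_conv Ttr hT cB) b1B b2B.
  pose P w := w \in B /\ connect (medge (compB H B) (T :&: DeltaB H B)) (compB H B b1) (compB H B w).
  have : P b2.
    apply: (conn_ind (e := medge id (Tin T B)) (P := P) (x := b1)) cBT; first by split; rewrite ?connect0.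
    move=> w w' [wB cw] /medgeP [e [u [v [eT ue ve uv [uw vw']]]]]; rewrite /= in uw vw'; subst u v.
    move: eT; rewrite inE => /andP [eT eB]; have w'B := subsetP eB _ ve.
    split => //; apply: connect_trans cw _.
    case: (boolP (connect (adjB H B) w w')) => cww.
      by rewrite (compB_eq cww) connect0.
    apply: connect1; apply: (@medge_step V _ (compB H B) _ e) => //.
    by rewrite inE eT (pair_eq (TE _ eT) ue ve uv) DeltaI.
  by case.
move=> e u v; rewrite inE => /andP [eT eD] ue ve uv.
have ncuv := Delta_nconn eD ue ve uv.
have hF : [forall F in H, ~~ (B \subset F) ==> ~~ (e \subset F)].
  apply/forall_inP => F FH; apply/implyP => nBF; apply/negP => eF.
  move/negP: ncuv; apply; apply: connect1; rewrite /adjB uv /=.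
  by apply/exists_inP; exists F => //; rewrite nBF (subsetP eF _ ue) (subsetP eF _ ve).
have AV := AvoidE hT hF.
apply/negP => cG.
pose P (Z : {set V}) := exists a, Z = compB H B a /\ connect (medge id (T :\ e)) u a.
have : P (compB H B v).
  apply: (conn_ind (e := medge (compB H B) ((T :&: DeltaB H B) :\ e)) (P := P) (x := compB H B u)) cG.
    by exists u; rewrite connect0.
  move=> Z Z' [a [-> cua]] /medgeP [e' [u' [v' [e'E u'e v'e uv' [cu cv]]]]].
  exists v'; split => //.
  have au' : connect (adjB H B) a u' by move: (compB_self H B u'); rewrite cu inE.
  apply: connect_trans (connect_trans cua (AV _ _ au')) (connect1 _).
  move: e'E; rewrite !inE => /andP [e'ne /andP [e'T _]].
  by apply: (@medge_step V V id _ e') => //; rewrite !inE e'ne e'T.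
case=> a [eq cua].
have av : connect (adjB H B) a v by move: (compB_self H B v); rewrite eq inE.
by move/negP: (Tbr e u v eT ue ve uv); apply; apply: connect_trans cua (AV _ _ av).
Qed.


Lemma exists_min H (u v : V) : exists B, [/\ comp_edge H B, u \in B, v \in B &
  forall Y, comp_edge H Y -> u \in Y -> v \in Y -> ~ Y \proper B].
Proof.
suff: forall n X, #|X| < n -> comp_edge H X -> u \in X -> v \in X -> exists B, [/\ comp_edge H B, u \in B, v \in B &
  forall Y, comp_edge H Y -> u \in Y -> v \in Y -> ~ Y \proper B].
  move=> h; apply: (h #|[set: V]|.+1 [set: V]); rewrite ?inE //; by left.
elim=> [|n IH] X // Xn cX uX vX.
case: (classic (exists Y, [/\ comp_edge H Y, u \in Y, v \in Y & Y \proper X])) => [[Y [cY uY vY pY]]|nY].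
  by apply: (IH Y) => //; exact: leq_trans (proper_card pY) Xn.
exists X; split => // Y cY uY vY pY; apply: nY; by exists Y.
Qed.

Lemma fwd_cov H T e : is_tree T -> host_tree H T -> e \in T ->
  exists B, basic H B /\ e \in T :&: DeltaB H B.
Proof.
move=> Ttr hT eT; have [TE [Tconn Tbr]] := Ttr.
have /cards2P [u [v [uv eE]]] : #|e| == 2 by rewrite TE.
have ue : u \in e by rewrite eE !inE eqxx.
have ve : v \in e by rewrite eE !inE eqxx orbT.
have [B [cB uB vB minB]] := exists_min H u v.
have bB : basic H B.
  split => //; split; first exact: card_ge2 uB vB uv.
  move=> [S [hS [cS uS]]].
  case: (classic (exists2 Y, Y \in S & u \in Y /\ v \in Y)) => [[Y YS [uY vY]]|nS].
    have [cY pY] := hS Y YS; exact: minB cY uY vY pY.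
  have neY : forall Y, Y \in S -> ~~ (e \subset Y).
    move=> Y YS; apply/negP => eY; apply: nS; exists Y => //; split; exact: subsetP eY _ _.
  have cT : forall Y, Y \in S -> conT T Y.
    by move=> Y YS; apply: L2 Ttr (comp_conv Ttr hT (hS Y YS).1).
  move: uB vB; rewrite -uS => /bigcupP [Yu YuS uYu] /bigcupP [Yv YvS vYv].
  pose P (Z : {set V}) := Z \in S /\ forall z, z \in Z -> connect (medge id (T :\ e)) u z.
  have : P Yv.
    apply: (conn_ind (e := inter_rel S) (P := P) (x := Yu)); last exact: cS.2.
      by split => // z zY; apply: side (cT _ YuS) (neY _ YuS) _ _ uYu zY.
    move=> Z Z' [ZS cZ] /and3P [_ Z'S /set0Pn [w]]; rewrite inE => /andP [wZ wZ'].
    split => // z' z'Z'; apply: connect_trans (cZ w wZ) _.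
    exact: side (cT _ Z'S) (neY _ Z'S) _ _ wZ' z'Z'.
  case=> _ /(_ v vYv) cuv.
  by move/negP: (Tbr e u v eT ue ve uv); apply.
exists B; split => //; rewrite inE eT eE DeltaI //.
apply/negP => cuv.
case: (boolP [forall F in H, ~~ (B \subset F) ==> ~~ (e \subset F)]) => hF.
  by move/negP: (Tbr e u v eT ue ve uv); apply; apply: AvoidE hT hF _ _ cuv.
move: hF; rewrite negb_forall_in => /exists_inP [F FH].
rewrite negb_imply negbK => /andP [nBF eF].
have ne : F :&: B != set0 by apply/set0Pn; exists u; rewrite inE (subsetP eF _ ue) uB.
apply: (minB (F :&: B)); first exact: capcomp cB FH nBF ne.
- by rewrite inE (subsetP eF _ ue) uB.
- by rewrite inE (subsetP eF _ ve) vB.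
exact: capproper nBF.
Qed.

End Fwd.

Theorem mainTheorem16 (V : finType) (H T : {set {set V}}) :
  hypertree H -> is_tree T ->
  (host_tree H T <->
   exists Es : {set V} -> {set {set V}},
     (forall B, basic H B -> admissible H B (Es B)) /\
     (forall e, e \in T <-> exists B, basic H B /\ e \in Es B)).
Proof.
move=> [_ [T0 hT0]] Ttr; split.
  move=> hT; exists (fun B => T :&: DeltaB H B); split.
    by move=> B bB; apply: fwd_adm.
  move=> e; split; first exact: fwd_cov.
  by case=> B [_]; rewrite inE => /andP [].
case=> Es [adm Tiff]; split => // F FH x y xF yF.
have T0tr := hT0.1.
have cF : comp_edge H F.
  case: (boolP (F == [set: V])) => [/eqP ->|nF]; first by left.
  by right; right; split; [exact: obt_edge | rewrite properT].
exact: (back T0tr hT0 adm Tiff cF xF yF).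
Qed.
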